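(* Consider the two-route traffic model described in the context, under assumptions (A1)–(A6) listed there. Then the system admits a unique equilibrium point $\overline{x}\in\Omega$, and $\overline{x}\in P:=\{x\in\Omega:\ 0\le x_1\le C_1,\ 0\le x_2\le C_2\}$.
   Context: Two routes $i=1,2$ connect an origin to a destination. For each route there are positive parameters $B_i$ (jam density), $C_i$ (critical density), $F_i$ (maximum capacity) with $C_i<B_i$; the traffic demand is a constant $\phi>0$. Set $v_i=F_i/C_i$ and $E_i=v_iB_i$ (virtual capacity). The state is $x=(x_1,x_2)\in\Omega:=[0,B_1]\times[0,B_2]$ and evolves by $\dot x_i=\min\{\phi R_i(x),S_i(x_i)\}-D_i(x_i)$, $i=1,2$, where $S_i(x_i)=F_i$ if $x_i<C_i$ and $S_i(x_i)=\frac{F_i}{B_i-C_i}(B_i-x_i)$ otherwise, and $D_i(x_i)=v_ix_i$ if $x_i<C_i$ and $D_i(x_i)=F_i$ otherwise. The routing ratios are $R_i(x)=(1-\alpha)r_i^0+\alpha\, r_i(\tau(x))$, where $\alpha\in(0,1]$, $r_1^0,r_2^0\ge0$ with $r_1^0+r_2^0=1$, $\tau(x)=(\tau_1(x_1),\tau_2(x_2))$ with each $\tau_i$ a $C^1$ strictly increasing function, and $0\le r_i(\tau(x))\le1$, $r_1(\tau(x))+r_2(\tau(x))=1$ on $\Omega$, with $x\mapsto r_i(\tau(x))$ globally Lipschitz and $C^1$ on $\Omega$. Assumptions: (A1) $\phi<F_1+F_2$; (A2)–(A3) the properties of $\tau_i,r_i$ just listed; (A4) strict monotonicity $\partial R_i/\partial\tau_j>0$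 for $i\ne j$; (A5) $F_i>(1-\alpha)\phi r_i^0$, $i=1,2$; (A6) $\phi<E_i$, $i=1,2$. *)

(* Defs.v *)
From Stdlib Require Import Reals.
From Coquelicot Require Import Coquelicot.
Open Scope R_scope.

Definition supply (B C F x : R) : R :=
  if Rlt_dec x C then F else F / (B - C) * (B - x).

Definition demand (C F x : R) : R :=
  if Rlt_dec x C then (F / C) * x else F.

Definition routing (alpha ri0 : R) (ri : R -> R -> R) (t1 t2 : R) : R :=
  (1 - alpha) * ri0 + alpha * ri t1 t2.

(* Right-hand side of  xdot_i = min{phi R_i(x), S_i(x_i)} - D_i(x_i) *)
Definition field_i (phi alpha ri0 : R) (ri : R -> R -> R) (tau1 tau2 : R -> R)
  (Bi Ci Fi : R) (x1 x2 xi : R) : R :=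
  Rmin (phi * routing alpha ri0 ri (tau1 x1) (tau2 x2)) (supply Bi Ci Fi xi)
  - demand Ci Fi xi.

Definition inOmega (B1 B2 x1 x2 : R) : Prop := 0 <= x1 <= B1 /\ 0 <= x2 <= B2.

Definition tr_C1_on_Omega (B1 B2 : R) (g : R -> R -> R) : Prop :=
  exists d1 d2 : R -> R -> R,
    forall x1 x2, inOmega B1 B2 x1 x2 ->
      differentiable_pt_lim g x1 x2 (d1 x1 x2) (d2 x1 x2) /\
      continuity_2d_pt d1 x1 x2 /\ continuity_2d_pt d2 x1 x2.

Definition tr_Lipschitz_on_Omega (B1 B2 : R) (g : R -> R -> R) : Prop :=
  exists L, 0 <= L /\ forall x1 x2 y1 y2,
    inOmega B1 B2 x1 x2 -> inOmega B1 B2 y1 y2 ->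
    Rabs (g x1 x2 - g y1 y2) <= L * (Rabs (x1 - y1) + Rabs (x2 - y2)).

Definition tr_C1_fun (tau : R -> R) : Prop :=
  exists dtau : R -> R, forall t, is_derive tau t (dtau t) /\ continuous dtau t.

(* Main.v *)
Require Import Defs.
From Stdlib Require Import Reals Lra Psatz.
From Coquelicot Require Import Coquelicot.
Open Scope R_scope.

Lemma C1_cont (tau : R -> R) : tr_C1_fun tau -> continuity tau.
Proof.
  intros [dt Hd] x. apply continuity_pt_filterlim.
  apply (ex_derive_continuous tau x). exists (dt x). apply Hd.
Qed.

Lemma mono_gen (f tau : R -> R) (B a b : R) : continuity tau ->
  (forall s t, s < t -> tau s < tau t) ->
  (forall z, 0 <= z <= B -> exists d, is_derive f (tau z) d /\ 0 < d) ->
  0 <= a -> a <= b -> b <= B -> f (tau a) <= f (tau b).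
Proof.
  intros Hc Hinc Hd Ha Hab HbB.
  destruct (Req_dec a b) as [<-|Hne]; [lra|].
  assert (Hlt : a < b) by lra.
  pose proof (Hinc _ _ Hlt) as Htl.
  assert (Hpre : forall x, tau a <= x <= tau b -> exists d, is_derive f x d /\ 0 < d).
  { intros x Hx.
    destruct (IVT_gen tau a b x Hc) as [z [Hz Hzx]].
    { rewrite Rmin_left by lra. rewrite Rmax_right by lra. exact Hx. }
    rewrite Rmin_left in Hz by lra. rewrite Rmax_right in Hz by lra.
    rewrite <- Hzx. apply Hd. lra. }
  destruct (MVT_gen f (tau a) (tau b) (Derive f)) as [c [Hc1 Hc2]].
  - intros x Hx. rewrite Rmin_left in Hx by lra. rewrite Rmax_right in Hx by lra.
    destruct (Hpre x) as [d [Hd1 _]]; [lra|].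
    rewrite (is_derive_unique _ _ _ Hd1). exact Hd1.
  - intros x Hx. rewrite Rmin_left in Hx by lra. rewrite Rmax_right in Hx by lra.
    destruct (Hpre x Hx) as [d [Hd1 _]].
    apply continuity_pt_filterlim. apply (ex_derive_continuous f x). exists d; exact Hd1.
  - rewrite Rmin_left in Hc1 by lra. rewrite Rmax_right in Hc1 by lra.
    destruct (Hpre c Hc1) as [d [Hd1 Hd2]].
    rewrite (is_derive_unique _ _ _ Hd1) in Hc2. nra.
Qed.

Definition gf (phi C F s : R) := Rmin (phi * s) F * C / F.

Lemma char (B C F phi Rv x : R) : 0 < C -> C < B -> 0 < F -> 0 <= x ->
  (Rmin (phi * Rv) (supply B C F x) - demand C F x = 0 <-> x = gf phi C F Rv).
Proof.
  intros HC HCB HF Hx. unfold supply, demand, gf.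
  destruct (Rlt_dec x C) as [Hl|Hl].
  - split; intro H.
    + assert (E : Rmin (phi*Rv) F = F / C * x) by lra. rewrite E. field. lra.
    + assert (E : Rmin (phi*Rv) F = F / C * x) by (rewrite H; field; lra). lra.
  - split; intro H.
    + assert (Hm : Rmin (phi * Rv) (F / (B - C) * (B - x)) <= F / (B - C) * (B - x)) by apply Rmin_r.
      assert (HxC : x <= C).
      { assert (F <= F / (B - C) * (B - x)) by lra.
        assert (F * (B - C) <= F * (B - x)).
        { replace (F * (B - x)) with ((F / (B - C) * (B - x)) * (B - C)) by (field; lra).
          apply Rmult_le_compat_r; lra. }
        nra. }
      assert (HxC2 : x = C) by lra. rewrite HxC2 in *.
      replace (F / (B - C) * (B - C)) with F in H by (field; lra).
      assert (E : Rmin (phi*Rv) F = F) by lra. rewrite E. field. lra.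
    + assert (Rmin (phi * Rv) F <= F) by apply Rmin_r.
      assert (x <= C).
      { rewrite H. unfold Rdiv. rewrite Rmult_assoc.
        replace C with (F * (C * / F)) at 2 by (field; lra).
        apply Rmult_le_compat_r; [|lra]. apply Rmult_le_pos; [lra|]. left; apply Rinv_0_lt_compat; lra. }
      assert (HxC2 : x = C) by lra. rewrite HxC2 in *.
      replace (F / (B - C) * (B - C)) with F by (field; lra).
      assert (HmF : Rmin (phi * Rv) F = F).
      { destruct (Rle_dec F (phi*Rv)). apply Rmin_right; lra.
        exfalso. rewrite Rmin_left in H by lra.
        assert (C * F = phi*Rv*C) by (rewrite H at 1; field; lra). nra. }
      rewrite HmF. lra.
Qed.



Lemma gf_mono phi C F s t : 0 < phi -> 0 < C -> 0 < F -> s <= t -> gf phi C F s <= gf phi C F t.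
Proof.
  intros Hp HC HF Hst. unfold gf, Rdiv.
  apply Rmult_le_compat_r. left; apply Rinv_0_lt_compat; lra.
  apply Rmult_le_compat_r. lra.
  unfold Rmin. destruct (Rle_dec (phi*s) F), (Rle_dec (phi*t) F); nra.
Qed.

Lemma gf_range phi C F s : 0 < phi -> 0 < C -> 0 < F -> 0 <= s -> 0 <= gf phi C F s <= C.
Proof.
  intros Hp HC HF Hs. unfold gf.
  assert (0 <= Rmin (phi * s) F <= F).
  { unfold Rmin. destruct (Rle_dec (phi*s) F); split; nra. }
  split.
  - apply Rmult_le_pos. nra. left; apply Rinv_0_lt_compat; lra.
  - apply (Rmult_le_reg_r F); [lra|]. unfold Rdiv.
    rewrite Rmult_assoc, Rinv_l by lra. nra.
Qed.

Lemma Rmin_lip a b F : Rabs (Rmin a F - Rmin b F) <= Rabs (a - b).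
Proof. unfold Rmin. destruct (Rle_dec a F), (Rle_dec b F); unfold Rabs; repeat destruct Rcase_abs; lra. Qed.

Lemma gf_lip phi C F s t : 0 < phi -> 0 < C -> 0 < F ->
  Rabs (gf phi C F s - gf phi C F t) <= phi * C / F * Rabs (s - t).
Proof.
  intros Hp HC HF. unfold gf.
  replace (Rmin (phi * s) F * C / F - Rmin (phi * t) F * C / F)
    with ((Rmin (phi * s) F - Rmin (phi * t) F) * (C / F)) by (field; lra).
  rewrite Rabs_mult, (Rabs_pos_eq (C/F)) by (apply Rlt_le, Rdiv_lt_0_compat; lra).
  pose proof (Rmin_lip (phi*s) (phi*t) F) as H.
  replace (phi * s - phi * t) with (phi * (s - t)) in H by ring.
  rewrite Rabs_mult, (Rabs_pos_eq phi) in H by lra.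
  assert (0 <= C / F) by (apply Rlt_le, Rdiv_lt_0_compat; lra).
  replace (phi * C / F * Rabs (s - t)) with (phi * Rabs (s - t) * (C / F)) by (field; lra).
  apply Rmult_le_compat_r; lra.
Qed.

Definition clamp (s : R) := Rmax 0 (Rmin s 1).

Lemma clamp_lip s t : Rabs (clamp s - clamp t) <= Rabs (s - t).
Proof. unfold clamp, Rmax, Rmin. repeat destruct Rle_dec; unfold Rabs; repeat destruct Rcase_abs; lra. Qed.

Lemma clamp_range s : 0 <= clamp s <= 1.
Proof. unfold clamp, Rmax, Rmin. repeat destruct Rle_dec; lra. Qed.

Lemma clamp_id s : 0 <= s <= 1 -> clamp s = s.
Proof. intro. unfold clamp, Rmax, Rmin. repeat destruct Rle_dec; lra. Qed.

Lemma lip_cont (f : R -> R) K : 0 <= K -> (forall s t, Rabs (f s - f t) <= K * Rabs (s - t)) -> continuity f.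
Proof.
  intros HK Hl x eps Heps. exists (eps / (K + 1)). split.
  - apply Rdiv_lt_0_compat; lra.
  - intros y [_ Hy]. simpl in *. unfold R_dist in *.
    eapply Rle_lt_trans. apply Hl.
    apply (Rmult_lt_compat_r (K+1)) in Hy; [|lra].
    replace (eps / (K + 1) * (K + 1)) with eps in Hy by (field; lra).
    pose proof (Rabs_pos (y - x)). nra.
Qed.

Theorem theorem1
  (B1 B2 C1 C2 F1 F2 phi alpha r10 r20 : R)
  (tau1 tau2 : R -> R) (r1 r2 : R -> R -> R)
  (HC1 : 0 < C1) (HC2 : 0 < C2) (HCB1 : C1 < B1) (HCB2 : C2 < B2)
  (HF1 : 0 < F1) (HF2 : 0 < F2) (Hphi : 0 < phi)
  (Halpha : 0 < alpha <= 1)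
  (Hr10 : 0 <= r10) (Hr20 : 0 <= r20) (Hr0 : r10 + r20 = 1)
  (HA1 : phi < F1 + F2)
  (Htau1C1 : tr_C1_fun tau1) (Htau2C1 : tr_C1_fun tau2)
  (Htau1inc : forall s t, s < t -> tau1 s < tau1 t)
  (Htau2inc : forall s t, s < t -> tau2 s < tau2 t)
  (Hr1bnd : forall x1 x2, inOmega B1 B2 x1 x2 ->
             0 <= r1 (tau1 x1) (tau2 x2) <= 1)
  (Hr2bnd : forall x1 x2, inOmega B1 B2 x1 x2 ->
             0 <= r2 (tau1 x1) (tau2 x2) <= 1)
  (Hrsum : forall x1 x2, inOmega B1 B2 x1 x2 ->
             r1 (tau1 x1) (tau2 x2) + r2 (tau1 x1) (tau2 x2) = 1)
  (Hr1Lip : tr_Lipschitz_on_Omega B1 B2 (fun x1 x2 => r1 (tau1 x1) (tau2 x2)))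
  (Hr2Lip : tr_Lipschitz_on_Omega B1 B2 (fun x1 x2 => r2 (tau1 x1) (tau2 x2)))
  (Hr1C1 : tr_C1_on_Omega B1 B2 (fun x1 x2 => r1 (tau1 x1) (tau2 x2)))
  (Hr2C1 : tr_C1_on_Omega B1 B2 (fun x1 x2 => r2 (tau1 x1) (tau2 x2)))
  (HA4_12 : forall x1 x2, inOmega B1 B2 x1 x2 ->
     exists d, is_derive (fun t => routing alpha r10 r1 (tau1 x1) t) (tau2 x2) d
               /\ 0 < d)
  (HA4_21 : forall x1 x2, inOmega B1 B2 x1 x2 ->
     exists d, is_derive (fun t => routing alpha r20 r2 t (tau2 x2)) (tau1 x1) d
               /\ 0 < d)
  (HA5_1 : F1 > (1 - alpha) * phi * r10)
  (HA5_2 : F2 > (1 - alpha) * phi * r20)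
  (HA6_1 : phi < F1 / C1 * B1)
  (HA6_2 : phi < F2 / C2 * B2) :
  exists x1 x2 : R,
    inOmega B1 B2 x1 x2 /\
    field_i phi alpha r10 r1 tau1 tau2 B1 C1 F1 x1 x2 x1 = 0 /\
    field_i phi alpha r20 r2 tau1 tau2 B2 C2 F2 x1 x2 x2 = 0 /\
    (0 <= x1 <= C1 /\ 0 <= x2 <= C2) /\
    (forall y1 y2, inOmega B1 B2 y1 y2 ->
       field_i phi alpha r10 r1 tau1 tau2 B1 C1 F1 y1 y2 y1 = 0 ->
       field_i phi alpha r20 r2 tau1 tau2 B2 C2 F2 y1 y2 y2 = 0 ->
       y1 = x1 /\ y2 = x2).
Proof.
  pose (R1f := fun x1 x2 => routing alpha r10 r1 (tau1 x1) (tau2 x2)).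
  pose (R2f := fun x1 x2 => routing alpha r20 r2 (tau1 x1) (tau2 x2)).
  assert (HRsum : forall x1 x2, inOmega B1 B2 x1 x2 -> R1f x1 x2 + R2f x1 x2 = 1).
  { intros x1 x2 Hx. unfold R1f, R2f, routing.
    pose proof (Hrsum x1 x2 Hx). 
    replace ((1 - alpha) * r10 + alpha * r1 (tau1 x1) (tau2 x2) +
       ((1 - alpha) * r20 + alpha * r2 (tau1 x1) (tau2 x2)))
    with ((1 - alpha) * (r10 + r20) + alpha * (r1 (tau1 x1) (tau2 x2) + r2 (tau1 x1) (tau2 x2))) by ring.
    rewrite H, Hr0. ring. }
  assert (HR1b : forall x1 x2, inOmega B1 B2 x1 x2 -> 0 <= R1f x1 x2 <= 1).
  { intros x1 x2 Hx. unfold R1f, routing. pose proof (Hr1bnd x1 x2 Hx). nra. }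
  pose proof (C1_cont _ Htau1C1) as Hc1.
  pose proof (C1_cont _ Htau2C1) as Hc2.
  assert (mono12 : forall a b c, 0 <= a <= B1 -> 0 <= b -> b <= c -> c <= B2 -> R1f a b <= R1f a c).
  { intros a b c Ha Hb Hbc HcB. unfold R1f.
    apply (mono_gen (fun t => routing alpha r10 r1 (tau1 a) t) tau2 B2 b c); auto.
    intros z Hz. apply HA4_12. split; lra. }
  assert (mono21 : forall a b c, 0 <= c <= B2 -> 0 <= a -> a <= b -> b <= B1 -> R2f a c <= R2f b c).
  { intros a b c Hc Ha Hab HbB. unfold R2f.
    apply (mono_gen (fun t => routing alpha r20 r2 t (tau2 c)) tau1 B1 a b); auto.
    intros z Hz. apply HA4_21. split; lra. }
  assert (Huniq : forall p1 p2 q1 q2, inOmega B1 B2 p1 p2 -> inOmega B1 B2 q1 q2 ->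
     p1 = gf phi C1 F1 (R1f p1 p2) -> p2 = gf phi C2 F2 (R2f p1 p2) ->
     q1 = gf phi C1 F1 (R1f q1 q2) -> q2 = gf phi C2 F2 (R2f q1 q2) ->
     p1 <= q1 -> q2 <= p2 -> p1 = q1 /\ p2 = q2).
  { intros p1 p2 q1 q2 Hp Hq Ep1 Ep2 Eq1 Eq2 H1 H2.
    destruct Hp as [Hp1 Hp2], Hq as [Hq1 Hq2].
    assert (A1 : R1f p1 q2 <= R1f p1 p2) by (apply mono12; lra).
    assert (A2 : R2f p1 q2 <= R2f q1 q2) by (apply mono21; lra).
    assert (S1 := HRsum p1 q2 (conj Hp1 Hq2)).
    assert (S2 := HRsum p1 p2 (conj Hp1 Hp2)).
    assert (S3 := HRsum q1 q2 (conj Hq1 Hq2)).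
    assert (R1f q1 q2 <= R1f p1 p2) by lra.
    assert (R2f p1 p2 <= R2f q1 q2) by lra.
    assert (q1 <= p1) by (rewrite Ep1, Eq1; apply gf_mono; lra).
    assert (p2 <= q2) by (rewrite Ep2, Eq2; apply gf_mono; lra).
    split; lra. }
  destruct Hr1Lip as [L [HL HLip]].
  pose (k := fun s => R1f (gf phi C1 F1 (clamp s)) (gf phi C2 F2 (1 - clamp s)) - clamp s).
  assert (Hin : forall s, inOmega B1 B2 (gf phi C1 F1 (clamp s)) (gf phi C2 F2 (1 - clamp s))).
  { intro s. pose proof (clamp_range s).
    pose proof (gf_range phi C1 F1 (clamp s) Hphi HC1 HF1 ltac:(lra)).
    pose proof (gf_range phi C2 F2 (1 - clamp s) Hphi HC2 HF2 ltac:(lra)).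
    split; lra. }
  assert (Hkc : continuity k).
  { apply (lip_cont k (alpha * L * (phi * C1 / F1 + phi * C2 / F2) + 1)).
    - assert (0 <= phi * C1 / F1) by (apply Rlt_le, Rdiv_lt_0_compat; nra).
      assert (0 <= phi * C2 / F2) by (apply Rlt_le, Rdiv_lt_0_compat; nra).
      assert (0 <= alpha * L) by nra. nra.
    - intros s t. unfold k, R1f, routing.
      pose proof (HLip _ _ _ _ (Hin s) (Hin t)) as Hl. simpl in Hl.
      pose proof (gf_lip phi C1 F1 (clamp s) (clamp t) Hphi HC1 HF1) as G1.
      pose proof (gf_lip phi C2 F2 (1 - clamp s) (1 - clamp t) Hphi HC2 HF2) as G2.
      replace (1 - clamp s - (1 - clamp t)) with (clamp t - clamp s) in G2 by ring.
      rewrite (Rabs_minus_sym (clamp t)) in G2.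
      pose proof (clamp_lip s t) as Cl.
      set (a := r1 (tau1 (gf phi C1 F1 (clamp s))) (tau2 (gf phi C2 F2 (1 - clamp s)))) in *.
      set (b := r1 (tau1 (gf phi C1 F1 (clamp t))) (tau2 (gf phi C2 F2 (1 - clamp t)))) in *.
      replace ((1 - alpha) * r10 + alpha * a - clamp s - ((1 - alpha) * r10 + alpha * b - clamp t))
        with (alpha * (a - b) - (clamp s - clamp t)) by ring.
      eapply Rle_trans. apply Rabs_triang. rewrite Rabs_Ropp, Rabs_mult, (Rabs_pos_eq alpha) by lra.
      set (d := Rabs (clamp s - clamp t)) in *.
      set (e := Rabs (s - t)) in *.
      set (M1 := phi * C1 / F1) in *. set (M2 := phi * C2 / F2) in *.
      assert (0 <= M1) by (apply Rlt_le, Rdiv_lt_0_compat; unfold M1; nra).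
      assert (0 <= M2) by (apply Rlt_le, Rdiv_lt_0_compat; unfold M2; nra).
      assert (0 <= d) by apply Rabs_pos.
      assert (Rabs (a - b) <= L * ((M1 + M2) * e)).
      { eapply Rle_trans. exact Hl. apply Rmult_le_compat_l; [lra|]. nra. }
      assert (alpha * Rabs (a - b) <= alpha * (L * ((M1 + M2) * e))) by (apply Rmult_le_compat_l; lra).
      nra. }
  destruct (IVT_gen k 0 1 0 Hkc) as [s [Hs Hks]].
  { assert (k 0 >= 0).
    { unfold k. rewrite clamp_id by lra. pose proof (HR1b _ _ (Hin 0)). rewrite clamp_id in H by lra. lra. }
    assert (k 1 <= 0).
    { unfold k. rewrite clamp_id by lra. pose proof (HR1b _ _ (Hin 1)). rewrite clamp_id in H0 by lra. lra. }
    split. eapply Rle_trans. apply Rmin_r. lra. eapply Rle_trans; [|apply Rmax_l]. lra. }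
  rewrite Rmin_left in Hs by lra. rewrite Rmax_right in Hs by lra.
  pose proof (Hin s) as Hxs. unfold k in Hks. rewrite clamp_id in Hks, Hxs by lra.
  set (x1 := gf phi C1 F1 s) in *. set (x2 := gf phi C2 F2 (1 - s)) in *.
  assert (E1 : R1f x1 x2 = s) by lra.
  assert (E2 : R2f x1 x2 = 1 - s) by (pose proof (HRsum x1 x2 Hxs); lra).
  assert (Ex1 : x1 = gf phi C1 F1 (R1f x1 x2)) by (rewrite E1; reflexivity).
  assert (Ex2 : x2 = gf phi C2 F2 (R2f x1 x2)) by (rewrite E2; reflexivity).
  pose proof (gf_range phi C1 F1 s Hphi HC1 HF1 ltac:(lra)).
  pose proof (gf_range phi C2 F2 (1 - s) Hphi HC2 HF2 ltac:(lra)).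
  exists x1, x2. split; [exact Hxs|]. split; [|split; [|split]].
  - unfold field_i. exact (proj2 (char B1 C1 F1 phi _ x1 HC1 HCB1 HF1 ltac:(unfold x1; lra)) Ex1).
  - unfold field_i. exact (proj2 (char B2 C2 F2 phi _ x2 HC2 HCB2 HF2 ltac:(unfold x2; lra)) Ex2).
  - split; [exact H|exact H0].
  - intros y1 y2 Hy Fy1 Fy2.
    assert (Ey1 : y1 = gf phi C1 F1 (R1f y1 y2)).
    { exact (proj1 (char B1 C1 F1 phi _ y1 HC1 HCB1 HF1 (proj1 (proj1 Hy))) Fy1). }
    assert (Ey2 : y2 = gf phi C2 F2 (R2f y1 y2)).
    { exact (proj1 (char B2 C2 F2 phi _ y2 HC2 HCB2 HF2 (proj1 (proj2 Hy))) Fy2). }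
    destruct (Rle_dec y1 x1) as [a1|a1]; destruct (Rle_dec x2 y2) as [a2|a2].
    + exact (Huniq y1 y2 x1 x2 Hy Hxs Ey1 Ey2 Ex1 Ex2 a1 a2).
    +
      destruct (Req_dec y1 x1) as [e|ne].
      * destruct (Huniq x1 x2 y1 y2 Hxs Hy Ex1 Ex2 Ey1 Ey2 ltac:(lra) ltac:(lra)). split; lra.
      * exfalso.
        assert (R1f y1 y2 < R1f x1 x2).
        { destruct (Rlt_le_dec (R1f y1 y2) (R1f x1 x2)); auto.
          assert (gf phi C1 F1 (R1f x1 x2) <= gf phi C1 F1 (R1f y1 y2)) by (apply gf_mono; lra). lra. }
        assert (R2f y1 y2 < R2f x1 x2).
        { destruct (Rlt_le_dec (R2f y1 y2) (R2f x1 x2)); auto.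
          assert (gf phi C2 F2 (R2f x1 x2) <= gf phi C2 F2 (R2f y1 y2)) by (apply gf_mono; lra). lra. }
        pose proof (HRsum _ _ Hy). pose proof (HRsum _ _ Hxs). lra.
    + destruct (Req_dec x2 y2) as [e|ne].
      * destruct (Huniq x1 x2 y1 y2 Hxs Hy Ex1 Ex2 Ey1 Ey2 ltac:(lra) ltac:(lra)). split; lra.
      * exfalso.
        assert (R1f x1 x2 < R1f y1 y2).
        { destruct (Rlt_le_dec (R1f x1 x2) (R1f y1 y2)); auto.
          assert (gf phi C1 F1 (R1f y1 y2) <= gf phi C1 F1 (R1f x1 x2)) by (apply gf_mono; lra). lra. }
        assert (R2f x1 x2 < R2f y1 y2).
        { destruct (Rlt_le_dec (R2f x1 x2) (R2f y1 y2)); auto.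
          assert (gf phi C2 F2 (R2f y1 y2) <= gf phi C2 F2 (R2f x1 x2)) by (apply gf_mono; lra). lra. }
        pose proof (HRsum _ _ Hy). pose proof (HRsum _ _ Hxs). lra.
    + destruct (Huniq x1 x2 y1 y2 Hxs Hy Ex1 Ex2 Ey1 Ey2 ltac:(lra) ltac:(lra)). split; lra.
Qed.
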